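(* There exists at most one family $(\phi_k)_{k\geq 0}$ of $\mathbb{Z}[q,q^{-1}]$-linear maps $\phi_k\colon H_k\to\mathbb{Q}(q)$ satisfying all of the following: (i) $\phi_k(xy)=\phi_k(yx)$ for all $k$ and all $x,y\in H_k$; (ii) $\phi_0(1)=1$ and $\phi_1(1)=1$; (iii) for every $k\geq 2$ and every word $w$ in $\tau_1,\dots,\tau_{k-1}$ such that some letter $\tau_i$ ($1\le i\le k-1$) does not occur in $w$, one has $\phi_k(\theta_w)=0$; (iv) for every $k\geq 2$ and every $x\in H_{k-1}\subset H_k$, one has $\phi_k(\theta_{k-1}x)=\phi_{k-1}(x)$.
   Context: For $n\geq 0$, the Hecke algebra $H_n$ is the unital $\mathbb{Z}[q,q^{-1}]$-algebra generated by $\theta_1,\dots,\theta_{n-1}$ (so $H_0=H_1=\mathbb{Z}[q,q^{-1}]$) subject to the relations $\theta_i^2=[2]\theta_i$ (with $[2]=q+q^{-1}$); $\theta_i\theta_j=\theta_j\theta_i$ for $|i-j|\geq 2$; and $\theta_i\theta_{i+1}\theta_i+\theta_{i+1}=\theta_{i+1}\theta_i\theta_{i+1}+\theta_i$ for $1\le i\le n-2$. For $n\geq2$, $H_{n-1}$ embeds in $H_n$ via $\theta_i\mapsto\theta_i$. Let $\tau_i=(i\ i+1)\in S_n$ and for a word $w=\tau_{i_1}\cdots\tau_{i_l}$ set $\theta_w=\theta_{i_1}\cdots\theta_{i_l}$. Graphically, $\theta_i$ is drawn as $n$ upward strands of label $1$ where strands $i,i+1$ merge into an edge of label $2$ (a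 ``dumble'') and split again; $\phi_k$ models a function on the closures of such diagrams in an annulus (vinyl graphs of level $k$), condition (iii) says $\phi$ vanishes on disconnected closures, and condition (iv) says closures related by removing an outer curl (an outer digon) have equal value. *)

(* Defs.v *)
From HB Require Import structures.
From mathcomp Require Import all_boot all_order all_algebra.
From mathcomp Require Import fraction.
Set Implicit Arguments. Unset Strict Implicit. Unset Printing Implicit Defensive.
Import Order.TTheory GRing.Theory Num.Theory.
Local Open Scope ring_scope.

Definition Qq : fieldType := {fraction {poly rat}}.
Definition qQ : Qq := tofrac 'X.

Definition qpow (A : pzRingType) (q qi : A) (m : int) : A :=
  match m with Posz n => q ^+ n | Negz n => qi ^+ n.+1 end.

(* theta_w for a word w = [:: i_1; ...; i_l] (letters are the indices i
   of the generators tau_i / theta_i) *)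
Definition theta_word (A : pzRingType) (th : nat -> A) (w : seq nat) : A :=
  \prod_(i <- w) th i.

Definition is_word (n : nat) (w : seq nat) : bool :=
  all (fun i : nat => (1 <= i <= n.-1)%N) w.

(* A family (H n)_n of Z[q,q^-1]-algebras (rings with a central unit q with
   inverse qi) with elements theta_1..theta_{n-1} satisfying the Hecke
   relations, spanned over Z[q,q^-1] by the theta_w, together with the
   structure maps H_{n} -> H_{n+1} (theta_i |-> theta_i). *)
Definition hecke_family (H : nat -> pzRingType) (q qi : forall n, H n)
    (th : forall n, nat -> H n) (iota : forall n, H n -> H n.+1) : Prop :=
  (forall n, q n * qi n = 1 /\ qi n * q n = 1) /\
  (forall n (x : H n), q n * x = x * q n) /\
  (forall n i, (1 <= i <= n.-1)%N ->
     th n i * th n i = (q n + qi n) * th n i) /\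
  (forall n i j, (1 <= i <= n.-1)%N -> (1 <= j <= n.-1)%N ->
     (j + 2 <= i)%N || (i + 2 <= j)%N -> th n i * th n j = th n j * th n i) /\
  (forall n i, (1 <= i)%N -> (i <= n - 2)%N ->
     th n i * th n i.+1 * th n i + th n i.+1 =
     th n i.+1 * th n i * th n i.+1 + th n i) /\
  (forall n (x : H n), exists s : seq (int * int * seq nat),
     all (fun t => is_word n t.2) s /\
     x = \sum_(t <- s) (t.1.1%:~R * qpow (q n) (qi n) t.1.2
                          * theta_word (th n) t.2)) /\
  (forall n, iota n 1 = 1 /\ iota n (q n) = q n.+1 /\
     (forall x y, iota n (x + y) = iota n x + iota n y) /\
     (forall x y, iota n (x * y) = iota n x * iota n y) /\
     (forall i, (1 <= i <= n.-1)%N -> iota n (th n i) = th n.+1 i)).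

Definition trace_family (H : nat -> pzRingType) (q qi : forall n, H n)
    (th : forall n, nat -> H n) (iota : forall n, H n -> H n.+1)
    (phi : forall n, H n -> Qq) : Prop :=
  (forall n (x y : H n), phi n (x + y) = phi n x + phi n y) /\
  (forall n (x : H n), phi n (q n * x) = qQ * phi n x) /\
  (forall n (x : H n), phi n (qi n * x) = qQ^-1 * phi n x) /\
  (forall n (x y : H n), phi n (x * y) = phi n (y * x)) /\
  phi 0%N 1 = 1 /\ phi 1%N 1 = 1 /\
  (forall k w, (2 <= k)%N -> is_word k w ->
     (exists i, [/\ (1 <= i)%N, (i <= k.-1)%N & i \notin w]) ->
     phi k (theta_word (th k) w) = 0) /\
  (forall k (x : H k), (1 <= k)%N ->
     phi k.+1 (th k.+1 k * iota k x) = phi k x).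

(* Main.v *)
Require Import Defs.
From HB Require Import structures.
From mathcomp Require Import all_boot all_order all_algebra.
From mathcomp Require Import zify.
Set Implicit Arguments. Unset Strict Implicit. Unset Printing Implicit Defensive.
Import GRing.Theory.
Local Open Scope ring_scope.


Definition letters (p : nat) (w : seq nat) := all (fun i : nat => (1 <= i <= p)%N) w.

Lemma theta_cat (R : pzRingType) (th : nat -> R) u v :
  theta_word th (u ++ v) = theta_word th u * theta_word th v.
Proof. by rewrite /theta_word big_cat. Qed.
Lemma theta_cons (R : pzRingType) (th : nat -> R) i v :
  theta_word th (i :: v) = th i * theta_word th v.
Proof. by rewrite /theta_word big_cons. Qed.
Lemma theta_nil (R : pzRingType) (th : nat -> R) :
  theta_word th [::] = 1.
Proof. by rewrite /theta_word big_nil. Qed.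

Inductive hspan (R : pzRingType) (q qi : R) (th : nat -> R) (S : seq nat -> Prop) : R -> Prop :=
 | sp_word w : S w -> hspan q qi th S (theta_word th w)
 | sp0 : hspan q qi th S 0
 | spD x y : hspan q qi th S x -> hspan q qi th S y -> hspan q qi th S (x + y)
 | spN x : hspan q qi th S x -> hspan q qi th S (- x)
 | spq x : hspan q qi th S x -> hspan q qi th S (q * x)
 | spqi x : hspan q qi th S x -> hspan q qi th S (qi * x).

Lemma span_trans (R : pzRingType) (q qi : R) th S T x :
  hspan q qi th S x -> (forall w, S w -> hspan q qi th T (theta_word th w)) ->
  hspan q qi th T x.
Proof.
move=> h hw; elim: h => *; by [apply: hw | constructor | apply: spD | apply: spN | apply: spq | apply: spqi].
Qed.

Lemma span_ctx (R : pzRingType) (q qi : R) th S T u v x :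
  (forall y, q * y = y * q) -> (forall y, qi * y = y * qi) ->
  hspan q qi th S x -> (forall w, S w -> T (u ++ w ++ v)) ->
  hspan q qi th T (theta_word th u * x * theta_word th v).
Proof.
move=> hq hqi h hw; elim: h => [w Sw| |x1 y1 _ h1 _ h2|x1 _ h1|x1 _ h1|x1 _ h1].
- by rewrite -!theta_cat -catA; apply: sp_word; apply: hw.
- by rewrite mulr0 mul0r; apply: sp0.
- by rewrite mulrDr mulrDl; apply: spD.
- by rewrite mulrN mulNr; apply: spN.
- have -> : theta_word th u * (q * x1) * theta_word th v = q * (theta_word th u * x1 * theta_word th v)
    by rewrite !mulrA (hq (theta_word th u)).
  by apply: spq.
- have -> : theta_word th u * (qi * x1) * theta_word th v = qi * (theta_word th u * x1 * theta_word th v)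
    by rewrite !mulrA (hqi (theta_word th u)).
  by apply: spqi.
Qed.

Lemma comm_word (R : pzRingType) (th : nat -> R) i w :
  (forall j, j \in w -> th i * th j = th j * th i) ->
  th i * theta_word th w = theta_word th w * th i.
Proof.
elim: w => [|j w IH] h; first by rewrite theta_nil mulr1 mul1r.
rewrite theta_cons mulrA h ?mem_head // -!mulrA IH // => k hk.
by apply: h; rewrite in_cons hk orbT.
Qed.

Lemma split_first (s : seq nat) p : p \in s -> exists s1 s2, s = s1 ++ p :: s2 /\ p \notin s1.
Proof.
elim: s => // a s IH; rewrite in_cons; case: eqP => [->|ne] /= h.
  by exists [::], s.
have [s1 [s2 [-> h2]]] := IH h.
exists (a :: s1), s2; split => //; rewrite in_cons negb_or h2 andbT; apply/eqP => e; apply: ne; by rewrite e.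
Qed.

Lemma count_letters p k s : letters p s -> (p < k)%N -> count_mem k s = 0%N.
Proof.
move=> h hk; apply/count_memPn/negP => /(allP h) /=; lia.
Qed.


Lemma letters_cat p u v : letters p (u ++ v) = letters p u && letters p v.
Proof. exact: all_cat. Qed.
Lemma letters_cons p i v : letters p (i :: v) = (1 <= i <= p)%N && letters p v.
Proof. by []. Qed.
Lemma letters_mono p p' z : letters p z -> (p <= p')%N -> letters p' z.
Proof. move=> h hp; apply/allP => j hj; move/allP: h => /(_ j hj); lia. Qed.

Lemma NF (R : pzRingType) (q qi : R) (th : nat -> R) (N : nat)
  (hqc : forall y, q * y = y * q) (hqic : forall y, qi * y = y * qi)
  (hsq : forall i, (1 <= i <= N.-1)%N -> th i * th i = (q + qi) * th i)
  (hfar : forall i j, (1 <= i <= N.-1)%N -> (1 <= j <= N.-1)%N ->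
     (j + 2 <= i)%N || (i + 2 <= j)%N -> th i * th j = th j * th i)
  (hbr : forall i, (1 <= i)%N -> (i <= N - 2)%N ->
     th i * th i.+1 * th i + th i.+1 = th i.+1 * th i * th i.+1 + th i) :
  forall p, (p < N)%N -> forall w, letters p w ->
  hspan q qi th (fun w => letters p w /\ (count_mem p w <= 1)%N) (theta_word th w).
Proof.
elim => [|p IHp] ltpN w hw.
  apply: sp_word; split => //; case: w hw => [|a w] //= /andP[h _]; lia.
have [c hc] := ubnP (count_mem p.+1 w).
elim: c w hw hc => // c IHc w hw hc.
case: (leqP (count_mem p.+1 w) 1) => h1; first by apply: sp_word.
have : p.+1 \in w by rewrite -has_pred1 has_count; lia.
move=> /split_first [x [r [ew hx]]].
have : p.+1 \in r.
  move: h1; rewrite ew count_cat /= eqxx (count_memPn hx) -has_pred1 has_count /=; lia.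
move=> /split_first [a [y [er ha]]].
subst w r.
move: hw; rewrite /letters all_cat /= all_cat /= => /and5P [hxl _ hal _ hyl].
move: hc; rewrite count_cat /= eqxx (count_memPn hx) count_cat /= eqxx (count_memPn ha) add0n => hc.
have hal' : letters p a.
  apply/allP => j hj; move/allP: hal => /(_ j hj) /andP [h2 h3].
  have : j != p.+1 by apply: contraNneq ha => <-.
  rewrite h2 /=; lia.
have hspa := IHp (ltnW ltpN) a hal'.
have -> : theta_word th (x ++ p.+1 :: a ++ p.+1 :: y) =
   theta_word th (x ++ [:: p.+1]) * theta_word th a * theta_word th (p.+1 :: y).
  by rewrite !(theta_cat, theta_cons, theta_nil) mulr1 !mulrA.
apply: (span_trans (S := fun w' => letters p.+1 w' /\ (count_mem p.+1 w' < c)%N)); last first.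
  move=> w' [h1' h2']; exact: IHc.
apply: (span_trans (span_ctx (T := fun w' => exists a', (letters p a' /\ (count_mem p a' <= 1)%N) /\ w' = (x ++ [:: p.+1]) ++ a' ++ p.+1 :: y) hqc hqic hspa _)).
  by move=> w' Sw'; exists w'; split.
move=> w' [a' [[ha1 ha2] ->]].
have ltp1 : (1 <= p.+1 <= N.-1)%N by lia.
have T1a : forall z, letters p z -> p \notin z -> th p.+1 * theta_word th z = theta_word th z * th p.+1.
  move=> z hz hpz; apply: comm_word => j hj; apply: hfar => //.
  - move/allP: hz => /(_ j hj); lia.
  - have : j != p by apply: contraNneq hpz => <-.
    move/allP: hz => /(_ j hj); lia.
have hxy : forall z, letters p z -> letters p.+1 (x ++ z ++ y).
  move=> z hz; rewrite /letters !all_cat hxl hyl andbT /=.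
  apply/allP => j hj; move/allP: hz => /(_ j hj); lia.
have cz : forall z, letters p z -> count_mem p.+1 z = 0%N.
  move=> z hz; exact: count_letters hz (ltnSn p).
case: (leqP (count_mem p a') 0) => hc0.
- have hpa : p \notin a' by apply/count_memPn; lia.
  have -> : theta_word th ((x ++ [:: p.+1]) ++ a' ++ p.+1 :: y) =
     q * theta_word th (x ++ a' ++ p.+1 :: y) + qi * theta_word th (x ++ a' ++ p.+1 :: y).
    rewrite !(theta_cat, theta_cons, theta_nil) mulr1 !mulrA.
    rewrite -(mulrA (theta_word th x) (th p.+1)) T1a // mulrA.
    rewrite -(mulrA _ (th p.+1) (th p.+1)) hsq //.
    by rewrite mulrDl mulrDr mulrDl !mulrA (hqc (theta_word th x)) (hqic (theta_word th x))
       -!(mulrA _ q) -!(mulrA _ qi) (hqc (theta_word th a')) (hqic (theta_word th a')) !mulrA.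
  have hxl' : letters p.+1 x := hxl.
  have hyl' : letters p.+1 y := hyl.
  have hw1 : letters p.+1 (x ++ a' ++ p.+1 :: y) /\ (count_mem p.+1 (x ++ a' ++ p.+1 :: y) < c)%N.
    split.
      rewrite !(letters_cat, letters_cons) hxl' hyl' (letters_mono ha1) //=; lia.
    rewrite !count_cat /= (count_memPn hx) (cz a' ha1) eqxx /=; lia.
  by apply: spD; [apply: spq | apply: spqi]; apply: sp_word.
- have : p \in a' by rewrite -has_pred1 has_count.
  move=> /split_first [s [t [ea hs]]]; subst a'.
  have hp1 : (1 <= p)%N.
    by move/allP: ha1 => /(_ p); rewrite mem_cat in_cons eqxx orbT => /(_ isT); lia.
  move: ha2; rewrite count_cat /= eqxx (count_memPn hs) /= => ht0.
  have ht : p \notin t by apply/count_memPn; move: ht0; rewrite add0n add1n ltnS leqn0 => /eqP.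
  move: ha1; rewrite letters_cat letters_cons => /and3P [hsl _ htl].
  have br : th p.+1 * th p * th p.+1 = th p * th p.+1 * th p + th p.+1 - th p.
    apply: (addIr (th p)); rewrite subrK -hbr //; lia.
  have -> : theta_word th ((x ++ [:: p.+1]) ++ (s ++ p :: t) ++ p.+1 :: y) =
     theta_word th (x ++ s ++ [:: p; p.+1; p] ++ t ++ y) +
     theta_word th (x ++ s ++ p.+1 :: t ++ y) - theta_word th (x ++ s ++ p :: t ++ y).
    rewrite !(theta_cat, theta_cons, theta_nil) mulr1 !mulrA.
    rewrite -(mulrA (theta_word th x) (th p.+1)) T1a // mulrA.
    rewrite -(mulrA _ (theta_word th t) (th p.+1)) -T1a // mulrA.
    have -> : forall A B C : R, A * th p.+1 * th p * th p.+1 * B * C = A * (th p.+1 * th p * th p.+1) * B * C.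
      by move=> *; rewrite !mulrA.
    by rewrite br !mulrDr !mulrDl !mulrN !mulNr !mulrA !mulr1.
  have cw : forall z, letters p z -> p.+1 \notin z.
    move=> z hz; apply/count_memPn; exact: cz.
  have hxl' : letters p.+1 x := hxl.
  have hyl' : letters p.+1 y := hyl.
  have hc' : ((count_mem p.+1 y).+2 <= c)%N by move: hc; rewrite add0n add1n ltnS.
  have cnt : forall z, letters p z -> count_mem p.+1 (x ++ z ++ y) = count_mem p.+1 y.
    by move=> z hz; rewrite !count_cat (count_memPn hx) (count_memPn (cw _ hz)).
  have lxy : forall z, letters p.+1 z -> letters p.+1 (x ++ z ++ y).
    by move=> z hz; rewrite !letters_cat hxl' hyl' hz.
  have cnt1 : forall z1 z2 i, letters p z1 -> letters p z2 -> (1 <= i <= p)%N ->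
      count_mem p.+1 (x ++ z1 ++ i :: z2 ++ y) = count_mem p.+1 y.
    move=> z1 z2 i g1 g2 hi; rewrite -cat_cons (catA z1) cnt //.
    by rewrite letters_cat letters_cons g1 g2 hi.
  have hpp : (1 <= p <= p.+1)%N by rewrite hp1 leqnSn.
  have hpp1 : (1 <= p.+1 <= p.+1)%N by rewrite leqnn.
  have hpf : (p == p.+1) = false by exact: ltn_eqF (ltnSn p).
  have cst : forall z, count_mem p.+1 (x ++ s ++ z ++ t ++ y) = (count_mem p.+1 z + count_mem p.+1 y)%N.
    move=> z; rewrite !count_cat (count_memPn hx) (count_memPn (cw _ hsl)) (count_memPn (cw _ htl)).
    by rewrite !add0n.
  apply: spD; [apply: spD|apply: spN]; apply: sp_word; split.
  - by rewrite !(letters_cat, letters_cons) hxl' hyl' (letters_mono hsl) ?(letters_mono htl) // hpp hpp1.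
  - by rewrite (cst [:: p; p.+1; p]) /= hpf eqxx.
  - by rewrite !(letters_cat, letters_cons) hxl' hyl' (letters_mono hsl) ?(letters_mono htl) // hpp1.
  - by rewrite (cst [:: p.+1]) /= eqxx.
  - by rewrite !(letters_cat, letters_cons) hxl' hyl' (letters_mono hsl) ?(letters_mono htl) // hpp.
  - by rewrite (cst [:: p]) /= hpf; exact: leq_trans (leqnSn _) hc'.
Qed.


Lemma P_mulz (R : pzRingType) (P : R -> Prop) : P 0 -> (forall a b, P a -> P b -> P (a+b)) ->
  (forall a, P a -> P (-a)) -> forall (z : int) y, P y -> P (z%:~R * y).
Proof.
move=> h0 hD hN z y hy.
have -> : z%:~R * y = y *~ z by rewrite mulrzl.
have hm : forall m, P (y *+ m).
  by elim=> [|m IH]; [rewrite mulr0n | rewrite mulrS; apply: hD].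
case: z => m; first by rewrite -pmulrn.
by rewrite NegzE mulrNz -pmulrn; apply: hN.
Qed.

Lemma P_qpow (R : pzRingType) (q qi : R) (P : R -> Prop) :
  (forall a, P a -> P (q * a)) -> (forall a, P a -> P (qi * a)) ->
  forall m y, P y -> P (qpow q qi m * y).
Proof.
move=> hq hqi m y hy; case: m => k /=.
  by elim: k => [|k IH]; [rewrite mul1r | rewrite exprS -mulrA; apply: hq].
elim: k => [|k IH]; first by rewrite expr1; apply: hqi.
by rewrite exprS -mulrA; apply: hqi.
Qed.

Lemma f0 (U V : zmodType) (f : U -> V) : (forall x y, f (x + y) = f x + f y) -> f 0 = 0.
Proof. by move=> h; apply: (addrI (f 0)); rewrite -h !addr0. Qed.
Lemma fN (U V : zmodType) (f : U -> V) : (forall x y, f (x + y) = f x + f y) -> forall x, f (- x) = - f x.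
Proof. by move=> h x; apply: (addrI (f x)); rewrite -h !subrr (f0 h). Qed.

Lemma iota_theta (H : nat -> pzRingType) (th : forall n, nat -> H n) (iota : forall n, H n -> H n.+1) n :
  iota n 1 = 1 -> (forall x y, iota n (x * y) = iota n x * iota n y) ->
  (forall i, (1 <= i <= n.-1)%N -> iota n (th n i) = th n.+1 i) ->
  forall w, is_word n w -> iota n (theta_word (th n) w) = theta_word (th n.+1) w.
Proof.
move=> h1 hM hth; elim=> [|i w IH] /=; first by rewrite !theta_nil.
by move=> /andP [hi hw]; rewrite !theta_cons hM hth // IH.
Qed.


Unset Implicit Arguments.
Set Strict Implicit.

Theorem mainTheorem3 (H : nat -> pzRingType) (q qi : forall n, H n)
    (th : forall n, nat -> H n) (iota : forall n, H n -> H n.+1) :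
  hecke_family q qi th iota ->
  forall phi psi : forall n, H n -> Qq,
    trace_family q qi th iota phi -> trace_family q qi th iota psi ->
    forall n (x : H n), phi n x = psi n x.
Proof.
move=> [hqqi [hqc [hsq [hfar [hbr [hsp hiota]]]]]] phi psi
  [pD [pq [pqi [pC [p0 [p1 [pz pm]]]]]]] [sD [sq [sqi [sC [s0 [s1 [sz sm]]]]]]].
have hqic : forall n (y : H n), qi n * y = y * qi n.
  move=> n y; have [e1 e2] := hqqi n.
  by rewrite -[qi n * y]mulr1 -e1 mulrA -(mulrA _ y) -hqc mulrA e2 mul1r.
have E0 : forall n, phi n 0 = psi n 0 by move=> n; rewrite (f0 (pD n)) (f0 (sD n)).
have ED : forall n a b, phi n a = psi n a -> phi n b = psi n b -> phi n (a + b) = psi n (a + b).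
  by move=> n a b ha hb; rewrite pD sD ha hb.
have EN : forall n a, phi n a = psi n a -> phi n (- a) = psi n (- a).
  by move=> n a ha; rewrite (fN (pD n)) (fN (sD n)) ha.
have Eq : forall n a, phi n a = psi n a -> phi n (q n * a) = psi n (q n * a).
  by move=> n a ha; rewrite pq sq ha.
have Eqi : forall n a, phi n a = psi n a -> phi n (qi n * a) = psi n (qi n * a).
  by move=> n a ha; rewrite pqi sqi ha.
have Ew : forall n w, is_word n w -> phi n (theta_word (th n) w) = psi n (theta_word (th n) w).
  elim/ltn_ind => n IH w.
  case: n IH => [|[|k]] IH hw.
  - case: w hw => [_|a w /andP [h _]]; last by lia.
    by rewrite theta_nil p0 s0.
  - case: w hw => [_|a w /andP [h _]]; last by lia.
    by rewrite theta_nil p1 s1.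
  have hw' : letters k.+1 w := hw.
  have := NF (hqc k.+2) (hqic k.+2) (hsq k.+2) (hfar k.+2) (hbr k.+2) (ltnSn k.+1) hw'.
  elim => [w' [hl hc]| |a b _ ha _ hb|a _ ha|a _ ha|a _ ha]; last 5 first.
  - exact: E0.
  - exact: (ED).
  - exact: (EN).
  - exact: (Eq).
  - exact: Eqi.
  case: (leqP (count_mem k.+1 w') 0) => hc0.
    have hn : k.+1 \notin w' by apply/count_memPn; lia.
    have ex : exists i, [/\ (1 <= i)%N, (i <= k.+2.-1)%N & i \notin w'] by exists k.+1.
    by rewrite (pz k.+2 _ isT hl ex) (sz k.+2 _ isT hl ex).
  have : k.+1 \in w' by rewrite -has_pred1 has_count.
  move=> /split_first [s [t [ew hs]]]; subst w'.
  move: hc; rewrite count_cat /= eqxx (count_memPn hs) add0n add1n ltnS leqn0 => /eqP ht0.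
  have ht : k.+1 \notin t by apply/count_memPn.
  move: hl; rewrite letters_cat letters_cons => /and3P [hsl _ htl].
  have hts : is_word k.+1 (t ++ s).
    rewrite /is_word all_cat; apply/andP; split; apply/allP => j hj.
      move/allP: htl => /(_ j hj); have : j != k.+1 by apply: contraNneq ht => <-.
      rewrite /=; lia.
    move/allP: hsl => /(_ j hj); have : j != k.+1 by apply: contraNneq hs => <-.
    rewrite /=; lia.
  have hio := iota_theta (th := th) (proj1 (hiota k.+1)) (proj1 (proj2 (proj2 (proj2 (hiota k.+1)))))
     (proj2 (proj2 (proj2 (proj2 (hiota k.+1))))) hts.
  rewrite theta_cat theta_cons pC sC -mulrA -theta_cat -hio pm // sm //.
  by apply: IH.
move=> n x; have [s [hall ->]] := hsp n x.
elim: s hall => [|t s IHs] /=; first by rewrite !big_nil.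
move=> /andP [ht hall]; rewrite !big_cons; apply: (ED); last exact: IHs.
rewrite -mulrA; apply: (P_mulz (P := fun y => phi n y = psi n y)) => //.
- exact: (ED).
- exact: (EN).
apply: (P_qpow (P := fun y => phi n y = psi n y)) => //.
- exact: (Eq).
- exact: Eqi.
exact: Ew.
Qed.
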